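(* Let $G_1=(V_1,E_1)$ and $G_2=(V_2,E_2)$ be word-representable graphs with disjoint vertex sets, $\mathcal{R}(G_1)=k_1$, $\mathcal{R}(G_2)=k_2$, and let $x\in V_1$, $y\in V_2$, $k=\max(k_1,k_2)$. Let $G'$ be the graph with vertex set $V_1\cup V_2$ and edge set $E_1\cup E_2\cup\{(x,y)\}$, and let $G''$ be the graph obtained from $G_1$ and $G_2$ by identifying $x$ and $y$ into a single vertex $z$. Then: (1) if $|V_1|=|V_2|=1$, then $G'$ and $G''$ are complete graphs, $k_1=k_2=1$, and $\mathcal{R}(G')=\mathcal{R}(G'')=1$; (2) if $\min(|V_1|,|V_2|)=1$ and $\max(|V_1|,|V_2|)>1$, then $\mathcal{R}(G'')=k$ and $\mathcal{R}(G')=\max(k,2)$; (3) if $\min(|V_1|,|V_2|)>1$, then $\mathcal{R}(G')=\mathcal{R}(G'')=\max(k,2)$.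
   Context: All graphs are finite and simple. For a word $w$ and distinct letters $x,y$ occurring in $w$, $x$ and $y$ alternate in $w$ if deleting all letters other than copies of $x$ and $y$ yields a word of the form $xyxy\cdots$ or $yxyx\cdots$ (of even or odd length). A graph $G=(V,E)$ is word-representable if there is a word $w$ over $V$ (each vertex occurring in $w$) such that for all distinct $x,y\in V$, $x$ and $y$ alternate in $w$ iff $(x,y)\in E$. A word is $k$-uniform if each letter occurs exactly $k$ times; $G$ is $k$-word-representable if some $k$-uniform word represents it; the representation number $\mathcal{R}(G)$ is the least such $k$. *)

(* Defs.v *)
From mathcomp Require Import all_boot.
Set Implicit Arguments. Unset Strict Implicit. Unset Printing Implicit Defensive.

Definition simple_graph (T : finType) (e : rel T) : Prop :=
  symmetric e /\ irreflexive e.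

Definition alternate (T : eqType) (w : seq T) (x y : T) : Prop :=
  let s := filter (fun c => (c == x) || (c == y)) w in
  exists n, s = mkseq (fun i => if odd i then y else x) n
         \/ s = mkseq (fun i => if odd i then x else y) n.

Definition represents (T : finType) (e : rel T) (w : seq T) : Prop :=
  (forall v : T, v \in w) /\
  (forall x y : T, x != y -> (alternate w x y <-> e x y)).

Definition word_representable (T : finType) (e : rel T) : Prop :=
  exists w, represents e w.

Definition uniform (T : eqType) (k : nat) (w : seq T) : Prop :=
  forall v : T, count_mem v w = k.

Definition k_word_representable (T : finType) (e : rel T) (k : nat) : Prop :=
  exists w, uniform k w /\ represents e w.

Definition rep_number (T : finType) (e : rel T) (k : nat) : Prop :=
  k_word_representable e k /\ (forall k', k_word_representable e k' -> k <= k').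

Definition complete_graph (T : finType) (e : rel T) : Prop :=
  forall u v : T, u != v -> e u v.

Definition join_edge (T1 T2 : finType) (e1 : rel T1) (e2 : rel T2)
    (x : T1) (y : T2) : rel (T1 + T2) :=
  fun u v => match u, v with
  | inl a, inl b => e1 a b
  | inr a, inr b => e2 a b
  | inl a, inr b => (a == x) && (b == y)
  | inr a, inl b => (a == y) && (b == x)
  end.

(* G'' : G1 and G2 glued by identifying x and y into a single vertex z.
   Vertex set: T1 + (T2 \ {y}); the merged vertex z is inl x. *)
Definition glue_vertex (T1 T2 : finType) (e1 : rel T1) (e2 : rel T2)
    (x : T1) (y : T2) : rel (T1 + {v : T2 | v != y}) :=
  fun u v => match u, v with
  | inl a, inl b => e1 a b
  | inr a, inr b => e2 (val a) (val b)
  | inl a, inr b => (a == x) && e2 y (val b)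
  | inr a, inl b => (b == x) && e2 (val a) y
  end.
Arguments glue_vertex {T1 T2} e1 e2 x y.
Arguments join_edge {T1 T2} e1 e2 x y.

(* Main.v *)
Require Import Defs.
From mathcomp Require Import all_boot zify.
Set Implicit Arguments. Unset Strict Implicit. Unset Printing Implicit Defensive.

Section Alt.
Variable T : eqType.
Implicit Types (w s : seq T) (a b c d : T).

Definition neqr : rel T := fun u v => u != v.
Definition pf a b : pred T := fun c => (c == a) || (c == b).
Definition altw w a b := sorted neqr (filter (pf a b) w).

Definition altseq c d n := mkseq (fun i => if odd i then d else c) n.

Lemma altseqS c d n : altseq c d n.+1 = c :: altseq d c n.
Proof.
rewrite /altseq /mkseq /=; congr cons.
rewrite -(addn0 1) iotaDl -map_comp; apply: eq_map => i /=.
by case: (odd i).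
Qed.

Lemma altseq_sorted c d n : c != d -> sorted neqr (altseq c d n).
Proof.
elim: n c d => [|n IH] c d cd //.
rewrite altseqS; case: n IH => [|n] IH //.
have := IH d c; rewrite eq_sym cd altseqS /= => /(_ isT) ->.
by rewrite /neqr cd.
Qed.

Lemma path_altseq s c d : c != d -> all (pf c d) s -> path neqr c s ->
  c :: s = altseq c d (size s).+1.
Proof.
elim: s c d => [|h s IH] c d cd.
  by move=> _ _; rewrite /altseq /mkseq.
rewrite /= => /andP [hcd hall] /andP [hc hp].
have hd : h = d.
  move: hcd hc; rewrite /pf /neqr; case/orP => /eqP // ->; by rewrite eqxx.
subst h. rewrite (IH d c) //.
- by rewrite [in RHS]altseqS.
- by rewrite eq_sym.
- move: hall; apply: sub_all => u; rewrite /pf; by rewrite orbC.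
Qed.

Lemma alternate_altw w a b : a != b -> (alternate w a b <-> altw w a b).
Proof.
move=> ab; rewrite /alternate /altw.
have hall : all (pf a b) (filter (pf a b) w) by rewrite filter_all.
rewrite -/(pf a b).
split.
  move=> [n [-> | ->]].
    exact: altseq_sorted.
  by apply: altseq_sorted; rewrite eq_sym.
move: hall; case: (filter (pf a b) w) => [|c s] hall hs.
  by exists 0; left.
move: hall hs => /= /andP [hc hall] hs.
case/orP: hc => /eqP hc; subst c.
  by exists (size s).+1; left; apply: path_altseq.
exists (size s).+1; right; apply: path_altseq => //; first by rewrite eq_sym.
by move: hall; apply: sub_all => u; rewrite /pf orbC.
Qed.

Lemma pf_sym a b : pf a b =1 pf b a.
Proof. by move=> u; rewrite /pf orbC. Qed.

Lemma altw_sym w a b : altw w a b = altw w b a.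
Proof. by rewrite /altw (eq_filter (pf_sym a b)). Qed.

End Alt.

Section Rot.
Variable T : eqType.
Implicit Types (w s : seq T) (a b c d : T).

Lemma count_last s c d : c != d -> all (pf c d) s -> path (@neqr T) c s ->
  count_mem c (c :: s) = count_mem d (c :: s) + (last c s == c).
Proof.
elim: s c d => [|h s IH] c d cd.
  by move=> _ _ /=; rewrite eqxx (negbTE cd).
rewrite /= => /andP [hcd hall] /andP [hc hp].
have hd : h = d.
  move: hcd hc; rewrite /pf /neqr; case/orP => /eqP // ->; by rewrite eqxx.
subst h.
have hall' : all (pf d c) s by move: hall; apply: sub_all => u; rewrite /pf orbC.
have := IH d c; rewrite eq_sym cd => /(_ isT hall' hp) /= .
rewrite eqxx (negbTE cd) eq_sym (negbTE cd) /= => E.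
have hl : (last d s == c) = ~~ (last d s == d).
  have : last d s \in pf d c.
    move: hall'; clear; case/lastP: s => [|t z]; first by rewrite /pf unfold_in /= eqxx.
    by rewrite last_rcons all_rcons => /andP [].
  rewrite /pf unfold_in /=; case/orP => /eqP ->; rewrite ?eqxx ?(negbTE cd) //.
  by rewrite eq_sym (negbTE cd).
rewrite hl; move: E; case: (last d s == d) => /= E; rewrite eqxx; lia.
Qed.

Lemma neqr_sym : subrel (fun y x : T => neqr x y) (@neqr T).
Proof. by move=> u v; rewrite /neqr eq_sym. Qed.

Lemma key_rot s c d : c != d -> all (pf c d) s ->
  count_mem c (c :: s) = count_mem d (c :: s) ->
  sorted (@neqr T) (c :: s) -> sorted (@neqr T) (rcons s c).
Proof.
move=> cd hall bal hs.
have := count_last cd hall hs; rewrite bal => E.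
have hl : (last c s == c) = false.
  by move: E; case: (last c s == c) => //= E; lia.
case: s hall bal hs E hl => [|h t] hall bal hs E hl; first by rewrite /= eqxx in hl.
rewrite /= rcons_path; move: hs => /= /andP [_ ->] /=.
by rewrite /neqr /= hl.
Qed.

Lemma key_rot2 s c d : c != d -> all (pf c d) s ->
  count_mem c (c :: s) = count_mem d (c :: s) ->
  sorted (@neqr T) (c :: s) = sorted (@neqr T) (rcons s c).
Proof.
move=> cd hall bal; apply/idP/idP; first exact: (key_rot cd hall bal).
move=> hs.
have h1 : sorted (@neqr T) (c :: rev s).
  rewrite -rev_rcons; apply: (sub_sorted neqr_sym).
  by rewrite rev_sorted.
have a1 : all (pf c d) (rev s) by rewrite all_rev.
have b1 : count_mem c (c :: rev s) = count_mem d (c :: rev s).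
  by move: bal => /=; rewrite !count_rev.
have h2 := key_rot cd a1 b1 h1.
have : sorted (@neqr T) (rev (rcons (rev s) c)).
  rewrite rev_sorted; apply: sub_sorted h2; by move=> u v; rewrite /neqr eq_sym.
by rewrite rev_rcons revK.
Qed.

Lemma count_pf w a b u : u \in pf a b -> count_mem u (filter (pf a b) w) = count_mem u w.
Proof.
move=> hu; rewrite count_filter; apply: eq_count => v /=.
case: eqP => //= ->; exact: hu.
Qed.

Lemma rot1_altw w a b : a != b -> count_mem a w = count_mem b w ->
  altw (rot 1 w) a b = altw w a b.
Proof.
case: w => [|c w] // ab bal.
rewrite rot1_cons /altw filter_rcons /=.
case hc: (pf a b c) => //.
have hall : all (pf a b) (filter (pf a b) w) by rewrite filter_all.
have bal' : count_mem a (c :: filter (pf a b) w) = count_mem b (c :: filter (pf a b) w).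
  have ua : a \in pf a b by rewrite unfold_in /pf eqxx.
  have ub : b \in pf a b by rewrite unfold_in /pf eqxx orbT.
  have ca := count_pf (c :: w) ua. have cb := count_pf (c :: w) ub.
  rewrite /= hc in ca cb. by rewrite ca cb.
move: hc; rewrite /pf /= => /orP [] /eqP hc; subst c.
  by symmetry; exact: (key_rot2 ab hall bal').
rewrite eq_sym in ab.
have hall2 : all (pf b a) [seq x <- w | pf a b x].
  by move: hall; apply: sub_all => u; rewrite /pf orbC.
symmetry; exact: (key_rot2 ab hall2 (esym bal')).
Qed.

Lemma count_rot n w u : count_mem u (rot n w) = count_mem u w.
Proof. by apply/permP; rewrite perm_rot. Qed.

Lemma rot_altw n w a b : a != b -> count_mem a w = count_mem b w ->
  altw (rot n w) a b = altw w a b.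
Proof.
move=> ab bal; elim: n => [|n IH]; first by rewrite rot0.
case: (ltnP n (size w)) => hn.
  by rewrite rotS // rot1_altw // ?count_rot.
by rewrite !rot_oversize // ltnW.
Qed.

End Rot.

Section Raise.
Variable T : eqType.
Implicit Types (w s : seq T) (a b c d z : T) (us : seq (seq T)).

Lemma three_pf a b u v x : u \in pf a b -> v \in pf a b -> x \in pf a b ->
  u != v -> x != u -> x != v -> False.
Proof.
rewrite !unfold_in /pf => /orP [] /eqP -> /orP [] /eqP -> /orP [] /eqP ->;
  by rewrite ?eqxx.
Qed.

Lemma two_pf a b u v x : u \in pf a b -> v \in pf a b -> x \in pf a b ->
  u != v -> (x == u) || (x == v).
Proof.
move=> hu hv hx uv; case: (boolP ((x == u) || (x == v))) => // /norP [h1 h2].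
exfalso; exact: (three_pf hu hv hx uv h1 h2).
Qed.

Lemma undup_alt s a b : a != b -> all (pf a b) s -> a \in s -> b \in s ->
  sorted (@neqr T) s -> sorted (@neqr T) (s ++ undup s).
Proof.
move=> ab; elim: s => [|c s IH] //= /andP [hc hall] ha hb hs.
case: s IH hall ha hb hs => [|h t] IH hall ha hb hs.
  move: ha hb; rewrite !inE => /eqP ea /eqP eb; by rewrite ea eb eqxx in ab.
move: hs => /= /andP [ch hs].
move: hall => /= /andP [hh hall].
case: ifP => cin.
  have key : forall u, u \in pf a b -> u \in h :: t.
    move=> u hu; have := two_pf hc hh hu ch; case/orP => /eqP -> //.
    by rewrite inE eqxx.
  have := IH; rewrite /= hh hall => /(_ isT).
  have hpa : a \in pf a b by rewrite unfold_in /pf eqxx.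
  have hpb : b \in pf a b by rewrite unfold_in /pf eqxx orbT.
  move=> /(_ (key _ hpa) (key _ hpb) hs) H.
  by rewrite /= ch.
have tnil : t = [::].
  case: t cin hs hall {IH ha hb} => [|h2 t] // cin hs hall.
  move: hs hall cin => /= /andP [hh2 _] /andP [h2in _].
  move/negbT; rewrite !inE !negb_or => /andP [_ /andP [ch2 _]].
  exfalso; apply: (three_pf hc hh h2in ch).
    by rewrite eq_sym.
  by rewrite eq_sym.
subst t.
move: cin; rewrite inE => cin. by rewrite /= ch /neqr /= eq_sym cin.
Qed.

Lemma raise_altw w a b : a != b -> a \in w -> b \in w ->
  altw (w ++ undup w) a b = altw w a b.
Proof.
move=> ab ha hb; rewrite /altw filter_cat filter_undup.
apply/idP/idP; first by case/cat_sorted2.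
apply: undup_alt ab _ _ _; first by rewrite filter_all.
  by rewrite mem_filter ha /pf eqxx.
by rewrite mem_filter hb /pf eqxx orbT.
Qed.

Lemma raise_count w c : count_mem c (w ++ undup w) = count_mem c w + (c \in w).
Proof. by rewrite count_cat (count_uniq_mem _ (undup_uniq w)) mem_undup. Qed.

Definition unif k w := forall c, c \in w -> count_mem c w = k.

Lemma raise_iter m k w : unif k w -> exists w',
  [/\ unif (k + m) w', w' =i w &
      forall a b, a != b -> a \in w -> b \in w -> altw w' a b = altw w a b].
Proof.
move=> hk; elim: m => [|m [w' [hu hm ha]]]; first by exists w; rewrite addn0.
exists (w' ++ undup w'); split.
- move=> c; rewrite mem_cat mem_undup orbb => hc.
  by rewrite raise_count hc hu // addnS addn1.
- by move=> c; rewrite mem_cat mem_undup orbb hm.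
- move=> a b ab ina inb; rewrite raise_altw // ?hm //; exact: ha.
Qed.

Lemma decomp0 z s : exists u0 us,
  [/\ s = u0 ++ flatten (map (cons z) us), z \notin u0 & all (fun u => z \notin u) us].
Proof.
elim: s => [|c s [u0 [us [-> h0 hus]]]]; first by exists [::], [::].
case: (eqVneq c z) => [->|cz].
  by exists [::], (u0 :: us); split => //=; rewrite h0.
by exists (c :: u0), us; split => //; rewrite inE negb_or eq_sym cz.
Qed.

Lemma count_blocks z us : all (fun u => z \notin u) us ->
  count_mem z (flatten (map (cons z) us)) = size us.
Proof.
elim: us => [|u us IH] //= /andP [hu hus].
by rewrite eqxx count_cat IH // (count_memPn hu).
Qed.

Lemma count_blocks_ne z a us : a != z ->
  count_mem a (flatten (map (cons z) us)) = sumn (map (count_mem a) us).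
Proof.
move=> az; elim: us => [|u us IH] //=.
by rewrite count_cat IH eq_sym (negbTE az).
Qed.

Lemma normalize w z k : z \in w -> unif k w -> exists us,
  [/\ size us = k, all (fun u => z \notin u) us,
      perm_eq (flatten (map (cons z) us)) w &
      forall a b, a != b -> a \in w -> b \in w ->
        altw (flatten (map (cons z) us)) a b = altw w a b].
Proof.
move=> zw hk.
have [u0 [us [ew h0 hus]]] := decomp0 z w.
set w' := rot (size u0) w.
have ew' : w' = flatten (map (cons z) us) ++ u0 by rewrite /w' ew rot_size_cat.
have [u0' [us' [ew2 h0' hus']]] := decomp0 z w'.
have u0nil : u0' = [::].
  case: us ew' ew zw hus => [|u1 us1] ew' ew zw hus.
    by move: zw; rewrite ew /= cats0 (negbTE h0).
  move: ew2; rewrite ew' /=; case: u0' h0' => [|c u0'] // h0' [] ec.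
  by rewrite ec inE eqxx in h0'.
subst u0'; rewrite cat0s in ew2.
have pw : perm_eq w' w by rewrite /w' perm_rot.
exists us'; split => //.
- rewrite -(count_blocks hus') -ew2.
  by rewrite (permP pw) hk.
- by rewrite -ew2.
- move=> a b ab ha hb; rewrite -ew2 /w' rot_altw //.
  by rewrite !hk.
Qed.

End Raise.

Section Glue.
Variable T : eqType.
Implicit Types (w s u v : seq T) (a b c d z : T) (us vs : seq (seq T)).

Definition Fz z (q : seq T * seq T) := z :: q.1 ++ q.2.
Definition gl z u1 v1 us vs := z :: v1 ++ u1 ++ flatten (map (Fz z) (zip us vs)).

Lemma nohas_filter (p : pred T) s : ~~ has p s -> filter p s = [::].
Proof. by rewrite has_filter negbK => /eqP. Qed.

Lemma filter_zip1 (p : pred T) z us vs : size us = size vs -> ~~ has p (flatten vs) ->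
  filter p (flatten (map (Fz z) (zip us vs))) = filter p (flatten (map (cons z) us)).
Proof.
elim: us vs => [|u us IH] [|v vs] //= [] hs; rewrite has_cat negb_or => /andP [h1 h2].
by rewrite /Fz /= !filter_cat (nohas_filter h1) IH // cats0.
Qed.

Lemma filter_zip2 (p : pred T) z us vs : size us = size vs -> ~~ has p (flatten us) ->
  filter p (flatten (map (Fz z) (zip us vs))) = filter p (flatten (map (cons z) vs)).
Proof.
elim: us vs => [|u us IH] [|v vs] //= [] hs; rewrite has_cat negb_or => /andP [h1 h2].
by rewrite /Fz /= !filter_cat (nohas_filter h1) IH //.
Qed.

Lemma glue_left (p : pred T) z u1 v1 us vs : size us = size vs ->
  ~~ has p (v1 ++ flatten vs) ->
  filter p (gl z u1 v1 us vs) = filter p (flatten (map (cons z) (u1 :: us))).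
Proof.
move=> hs; rewrite has_cat negb_or => /andP [h1 h2].
rewrite /gl /= !filter_cat (nohas_filter h1) filter_zip1 //.
Qed.

Lemma glue_right (p : pred T) z u1 v1 us vs : size us = size vs ->
  ~~ has p (u1 ++ flatten us) ->
  filter p (gl z u1 v1 us vs) = filter p (flatten (map (cons z) (v1 :: vs))).
Proof.
move=> hs; rewrite has_cat negb_or => /andP [h1 h2].
rewrite /gl /= !filter_cat (nohas_filter h1) filter_zip2 //.
Qed.

Lemma count_zip (q : pred T) z us vs : size us = size vs ->
  count q (flatten (map (Fz z) (zip us vs))) =
  count q (flatten (map (cons z) us)) + count q (flatten vs).
Proof.
elim: us vs => [|u us IH] [|v vs] //= [] hs.
rewrite /Fz /= !count_cat IH //; lia.
Qed.

Lemma glue_count (q : pred T) z u1 v1 us vs : size us = size vs ->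
  count q (gl z u1 v1 us vs) =
  count q (flatten (map (cons z) (u1 :: us))) + count q (v1 ++ flatten vs).
Proof.
move=> hs; rewrite /gl /= !count_cat count_zip //; lia.
Qed.

Definition dbl a s := exists p q, s = p ++ [:: a, a & q].

Lemma dbl_catl a s t : dbl a t -> dbl a (s ++ t).
Proof. by move=> [p [q ->]]; exists (s ++ p), q; rewrite catA. Qed.

Lemma dbl_catr a s t : dbl a s -> dbl a (s ++ t).
Proof. by move=> [p [q ->]]; exists p, (q ++ t); rewrite -catA. Qed.

Lemma dbl_not_sorted a s : dbl a s -> ~~ sorted (@neqr T) s.
Proof.
move=> [p [q ->]]; apply/negP => /cat_sorted2 [_] /=.
by rewrite /neqr eqxx.
Qed.

Lemma dbl_nseq a n : 2 <= n -> dbl a (nseq n a).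
Proof. by case: n => [|[|n]] // _; exists [::], (nseq n a). Qed.

Lemma dbl_cons (p : pred T) a c s : dbl a (filter p s) -> dbl a (filter p (c :: s)).
Proof. by move=> h /=; case: (p c) => //; apply: (@dbl_catl a [:: c]). Qed.

Lemma dbl_zip (p : pred T) a z u us vs : u \in us -> size us = size vs ->
  dbl a (filter p u) -> dbl a (filter p (flatten (map (Fz z) (zip us vs)))).
Proof.
elim: us vs => [|u' us IH] [|v vs] //= hin [] hs hd.
have H : forall X, dbl a X -> dbl a (if p z then z :: X else X).
  by move=> X hX; case: (p z) => //; apply: (@dbl_catl a [:: z]).
apply: H.
move: hin; rewrite inE => /orP [/eqP e|hin].
  subst u'; rewrite !filter_cat -catA; exact: dbl_catr.
by rewrite filter_cat; apply: dbl_catl; apply: IH.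
Qed.

Lemma filt_nseq a b u : b \notin u -> filter (pf a b) u = nseq (count_mem a u) a.
Proof.
elim: u => [|c u IH] //=; rewrite inE negb_or => /andP [bc hb].
have := IH hb; rewrite /pf => ->.
by rewrite (eq_sym c b) (negbTE bc) orbF; case: eqP => [->|].
Qed.

Lemma pigeon (l : seq (seq T)) (f : seq T -> nat) :
  (size l).+1 <= sumn (map f l) -> exists2 u, u \in l & 2 <= f u.
Proof.
elim: l => [|u l IH] //= h.
case: (leqP 2 (f u)) => hu; first by exists u; rewrite ?inE ?eqxx.
have [v hv hf] : exists2 v, v \in l & 2 <= f v by apply: IH; lia.
by exists v; rewrite // inE hv orbT.
Qed.

Lemma glue_cross z u1 v1 us vs a b : size us = size vs -> 0 < size us ->
  a != z -> b != z ->
  b \notin flatten (map (cons z) (u1 :: us)) ->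
  count_mem a (flatten (map (cons z) (u1 :: us))) = (size us).+1 ->
  ~~ sorted (@neqr T) (filter (pf a b) (gl z u1 v1 us vs)).
Proof.
case: us vs => [|u2 us2] [|v2 vs2] //= [] hs _ az bz hb hc.
apply: (@dbl_not_sorted a).
move: hb; rewrite !in_cons !mem_cat !in_cons !negb_or mem_cat negb_or => /and4P [_ hb1 _ /andP [hb2 hb3]].
have hpz : pf a b z = false by rewrite /pf !(eq_sym z) (negbTE az) (negbTE bz).
rewrite /gl /= hpz !filter_cat /Fz /= hpz filter_cat.
move: hc; rewrite eq_sym (negbTE az) add0n !count_cat /= eq_sym (negbTE az) add0n.
rewrite count_cat (count_blocks_ne _ az) => hc.
rewrite (filt_nseq _ hb1) filter_cat (filt_nseq _ hb2).
case: (leqP 2 (count_mem a u1 + count_mem a u2)) => h2.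
  apply: dbl_catl; rewrite catA; apply: dbl_catr.
  rewrite catA; apply: dbl_catr; rewrite -nseqD; exact: dbl_nseq.
have [u hu hu2] := pigeon (l := us2) (f := count_mem a) (ltac:(lia)).
do 3 apply: dbl_catl.
apply: (@dbl_zip (pf a b) a z u us2 vs2 hu hs).
have hbu : b \notin u.
  apply: contra hb3 => hbu; apply/flattenP.
  by exists (z :: u); [apply/mapP; exists u | rewrite inE hbu orbT].
rewrite (filt_nseq _ hbu); exact: dbl_nseq.
Qed.

End Glue.

Section GlueWords.
Variable U : eqType.
Implicit Types (w s u v : seq U) (a b c d z : U) (us vs : seq (seq U)).

Lemma mem_blocks1 z us c : c \in flatten (map (cons z) us) -> (c == z) || (c \in flatten us).
Proof.
elim: us => [|u us IH] //=; rewrite inE mem_cat => /orP [->//|/orP [h|h]].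
  by rewrite mem_cat h orbT.
by case/orP: (IH h) => [->//|h']; rewrite mem_cat h' !orbT.
Qed.

Lemma mem_blocks2 z us c : c \in flatten us -> c \in flatten (map (cons z) us).
Proof.
elim: us => [|u us IH] //=; rewrite !mem_cat => /orP [h|h].
  by rewrite inE mem_cat h orbT.
by rewrite inE mem_cat IH ?orbT.
Qed.

Lemma notz_flatten z us : all (fun u => z \notin u) us -> z \notin flatten us.
Proof.
elim: us => [|u us IH] //= /andP [h1 h2]; by rewrite mem_cat negb_or h1 IH.
Qed.

Lemma count_flat_cons z c us : c != z ->
  count_mem c (flatten (map (cons z) us)) = count_mem c (flatten us).
Proof.
move=> cz; elim: us => [|u us IH] //=.
by rewrite !count_cat IH eq_sym (negbTE cz).
Qed.

Lemma glue_words (W1 W2 : seq U) z K : 2 <= K -> unif K W1 -> unif K W2 ->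
  z \in W1 -> z \in W2 -> (forall c, c \in W1 -> c \in W2 -> c = z) ->
  exists W, [/\ unif K W, (forall c, c \in W = (c \in W1) || (c \in W2)),
    (forall a b, a != b -> a \in W1 -> b \in W1 -> altw W a b = altw W1 a b),
    (forall a b, a != b -> a \in W2 -> b \in W2 -> altw W a b = altw W2 a b) &
    (forall a b, a \in W1 -> a != z -> b \in W2 -> b != z -> altw W a b = false)].
Proof.
move=> K2 hu1 hu2 z1 z2 disj.
have [us [sus hus pus aus]] := normalize z1 hu1.
have [vs [svs hvs pvs avs]] := normalize z2 hu2.
case: us sus hus pus aus => [|u1 us] sus; first by move: K2; rewrite -sus.
move=> hus pus aus.
case: vs svs hvs pvs avs => [|v1 vs] svs; first by move: K2; rewrite -svs.
move=> hvs pvs avs.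
set B1 := flatten (map (cons z) (u1 :: us)) in pus aus.
set B2 := flatten (map (cons z) (v1 :: vs)) in pvs avs.
have ss : size us = size vs by move: sus svs => /= h1 h2; lia.
set W := gl z u1 v1 us vs.
have mB1 : B1 =i W1 by apply: perm_mem.
have mB2 : B2 =i W2 by apply: perm_mem.
have hz1 : z \notin flatten (u1 :: us) by apply: notz_flatten.
have hz2 : z \notin flatten (v1 :: vs) by apply: notz_flatten.
have vpart : forall c, c \in v1 ++ flatten vs -> (c \in W2) && (c != z).
  move=> c hc; rewrite -mB2.
  have hc' : c \in flatten (v1 :: vs) by [].
  rewrite mem_blocks2 //=; apply/eqP => e; subst c; by rewrite hc' in hz2.
have upart : forall c, c \in u1 ++ flatten us -> (c \in W1) && (c != z).
  move=> c hc; rewrite -mB1.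
  have hc' : c \in flatten (u1 :: us) by [].
  rewrite mem_blocks2 //=; apply/eqP => e; subst c; by rewrite hc' in hz1.
have cW : forall q, count q W = count q B1 + count q (v1 ++ flatten vs).
  by move=> q; rewrite /W glue_count.
have memW : forall c, c \in W = (c \in W1) || (c \in W2).
  move=> c.
  have pW : perm_eq W (B1 ++ (v1 ++ flatten vs)) by apply/permP => q; rewrite cW [in RHS]count_cat.
  rewrite (perm_mem pW) mem_cat mB1.
  case h1: (c \in W1) => //=.
  apply/idP/idP; first by move/vpart => /andP [].
  rewrite -mB2 /B2 /= inE mem_cat => /orP [/eqP e|/orP [h|h]].
  - by subst c; rewrite z1 in h1.
  - by rewrite mem_cat h.
  - case/orP: (mem_blocks1 h) => [/eqP e|h'].
      by subst c; rewrite z1 in h1.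
    by rewrite mem_cat h' orbT.
exists W; split.
- move=> c; rewrite memW => hc.
  have := cW (pred1 c); rewrite -/(count_mem c W) => ->.
  case h1: (c \in W1).
    rewrite (permP pus) hu1 //.
    suff -> : count_mem c (v1 ++ flatten vs) = 0 by rewrite addn0.
    apply/count_memPn; apply/negP => /vpart /andP [h2 h3].
    by rewrite (disj c h1 h2) eqxx in h3.
  rewrite h1 /= in hc.
  have cz : c != z by apply/eqP => e; subst c; rewrite z1 in h1.
  have -> : count_mem c B1 = 0.
    by rewrite (permP pus); apply/count_memPn; rewrite h1.
  rewrite add0n -(hu2 c hc) -(permP pvs) /B2 /= eq_sym (negbTE cz) add0n !count_cat.
  by rewrite count_flat_cons.
- exact: memW.
- move=> a b ab ha hb; rewrite -(aus a b ab ha hb) /altw glue_left //.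
  apply/hasPn => c /vpart /andP [h2 h3]; rewrite /pf; apply/negP.
  by case/orP => /eqP e; subst c; [rewrite (disj a ha h2) eqxx in h3 |
    rewrite (disj b hb h2) eqxx in h3].
- move=> a b ab ha hb; rewrite -(avs a b ab ha hb) /altw glue_right //.
  apply/hasPn => c /upart /andP [h2 h3]; rewrite /pf; apply/negP.
  by case/orP => /eqP e; subst c; [rewrite (disj a h2 ha) eqxx in h3 |
    rewrite (disj b h2 hb) eqxx in h3].
- move=> a b ha az hb bz; rewrite /altw /W; apply/negbTE.
  apply: glue_cross => //.
  + by move: K2; rewrite -sus /=; case: (us).
  + by rewrite -/B1 mB1; apply/negP => hb1; rewrite (disj b hb1 hb) eqxx in bz.
  + by rewrite -/B1 (permP pus) hu1.
Qed.

End GlueWords.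

Lemma rep_altw (T : finType) (e : rel T) w a b : represents e w -> a != b ->
  altw w a b = e a b.
Proof.
move=> [_ h] ab; apply/idP/idP => H.
  by apply/(h a b ab).1; apply/alternate_altw.
by apply/(alternate_altw w ab); apply/(h a b ab).2.
Qed.

Lemma rep_of (T : finType) (e : rel T) w : (forall v, v \in w) ->
  (forall a b, a != b -> altw w a b = e a b) -> represents e w.
Proof.
move=> h1 h2; split => // a b ab; rewrite (alternate_altw w ab) h2 //.
Qed.

Lemma sorted_map_inj (S U : eqType) (f : S -> U) (s : seq S) : injective f ->
  sorted (@neqr U) (map f s) = sorted (@neqr S) s.
Proof.
move=> fi; rewrite sorted_map; apply/idP/idP; apply: sub_sorted => u v /=;
  by rewrite /neqr inj_eq.
Qed.

Lemma altw_map (S U : eqType) (f : S -> U) w a b : injective f ->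
  altw (map f w) (f a) (f b) = altw w a b.
Proof.
move=> fi; rewrite /altw filter_map sorted_map_inj //.
by congr sorted; apply: eq_filter => c /=; rewrite /pf !inj_eq.
Qed.

Lemma lift (S : finType) (U : eqType) (e : rel S) (f : S -> U) k K w :
  injective f -> uniform k w -> represents e w -> k <= K ->
  exists W, [/\ unif K W, (forall c, c \in W -> exists a, c = f a),
    (forall a, f a \in W) & (forall a b, a != b -> altw W (f a) (f b) = e a b)].
Proof.
move=> fi hu hr kK.
set W0 := map f w.
have cW0 : forall a, count_mem (f a) W0 = k.
  move=> a; rewrite count_map -(hu a); apply: eq_count => v /=; by rewrite inj_eq.
have u0 : unif k W0 by move=> c /mapP [a _ ->].
have [W [uW mW aW]] := raise_iter (K - k) u0.
exists W; split.
- by rewrite subnKC in uW.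
- by move=> c; rewrite mW => /mapP [a _ ->]; exists a.
- by move=> a; rewrite mW; apply: map_f; case: hr.
- move=> a b ab; rewrite aW ?altw_map ?(rep_altw hr) ?inj_eq //;
    by apply: map_f; case: hr.
Qed.

Section Restrict.
Variables (S T : finType) (eS : rel S) (eT : rel T) (f : S -> T) (g : T -> option S).
Hypothesis gf : forall a, g (f a) = Some a.
Hypothesis fg : forall t a, g t = Some a -> t = f a.
Hypothesis he : forall a b, a != b -> eT (f a) (f b) = eS a b.

Lemma f_inj : injective f.
Proof. by apply: (pcan_inj gf). Qed.

Lemma count_pm W a : count_mem a (pmap g W) = count_mem (f a) W.
Proof.
elim: W => [|t W IH] //=; case E: (g t) => [s|] /=.
  by rewrite IH (fg E) (inj_eq f_inj).
rewrite IH; case: eqP => // e; by rewrite e gf in E.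
Qed.

Lemma filter_pm W a b :
  filter (pf (f a) (f b)) W = map f (filter (pf a b) (pmap g W)).
Proof.
elim: W => [|t W IH] //=; case E: (g t) => [s|] /=.
  rewrite (fg E) /pf !(inj_eq f_inj); case: ifP => _ //=.
  by rewrite IH.
rewrite IH /pf; case: eqP => [e|_]; first by rewrite e gf in E.
by case: eqP => [e|_] //; rewrite e gf in E.
Qed.

Lemma restrict k : k_word_representable eT k -> k_word_representable eS k.
Proof.
move=> [W [hu hr]]; exists (pmap g W); split.
  by move=> a; rewrite count_pm hu.
apply: rep_of.
  move=> v; rewrite -has_pred1 has_count count_pm -has_count has_pred1.
  by case: hr.
move=> a b ab; rewrite -he // -(rep_altw hr) ?(inj_eq f_inj) //.
by rewrite /altw filter_pm sorted_map_inj //; apply: f_inj.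
Qed.

End Restrict.

Lemma not_sorted_count (U : eqType) (s : seq U) :
  ~~ sorted (@neqr U) s -> exists c, 1 < count_mem c s.
Proof.
elim: s => [|x s IH] //=; case: s IH => [|y t] IH //=.
rewrite negb_and => /orP [h|h].
  exists x; move: h; rewrite /neqr negbK => /eqP <-; rewrite /= eqxx; lia.
have [c hc] := IH h; exists c; move: hc => /=; lia.
Qed.

Lemma k_pos (T : finType) (e : rel T) k (t : T) : k_word_representable e k -> 0 < k.
Proof.
move=> [w [hu [hm _]]]; rewrite -(hu t); rewrite -has_count has_pred1; exact: hm.
Qed.

Lemma k1_complete (T : finType) (e : rel T) : k_word_representable e 1 ->
  forall a b, a != b -> e a b.
Proof.
move=> [w [hu hr]] a b ab; rewrite -(rep_altw hr ab) /altw.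
apply/negPn/negP => /not_sorted_count [c hc].
have : count_mem c (filter (pf a b) w) <= count_mem c w.
  by rewrite count_filter; apply: sub_count => u /andP [].
by rewrite hu; lia.
Qed.

Lemma rep_le (T : finType) (e : rel T) k k' : rep_number e k -> k_word_representable e k' -> k <= k'.
Proof. by move=> [_ h] /h. Qed.

Lemma rep_uniq (T : finType) (e : rel T) k k' : rep_number e k -> rep_number e k' -> k = k'.
Proof.
move=> h1 h2; apply/eqP; rewrite eqn_leq (rep_le h1) ?(rep_le h2) //.
  by case: h1.
by case: h2.
Qed.

Section Gpp.
Variables (T1 T2 : finType) (e1 : rel T1) (e2 : rel T2) (x : T1) (y : T2).
Local Notation U := (T1 + {v : T2 | v != y})%type.
Local Notation G := (glue_vertex e1 e2 x y).

Definition g2 (b : T2) : U :=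
  if (insub b : option {v : T2 | v != y}) is Some b' then inr b' else inl x.

Lemma g2_y : g2 y = inl x.
Proof. by rewrite /g2 insubF // eqxx. Qed.

Lemma g2_val (b' : {v : T2 | v != y}) : g2 (val b') = inr b'.
Proof. by rewrite /g2 valK. Qed.

Lemma g2_cases b : (b = y /\ g2 b = inl x) \/
  exists b' : {v : T2 | v != y}, g2 b = inr b' /\ val b' = b.
Proof.
rewrite /g2; case: insubP => [b' hb eb|hb]; first by right; exists b'.
by left; move: hb; rewrite negbK => /eqP ->.
Qed.

Lemma g2_inj : injective g2.
Proof.
move=> a b; case: (g2_cases a) => [[-> ->]|[a' [-> ea]]];
  case: (g2_cases b) => [[-> ->]|[b' [-> eb]]] //.
by move=> [] e; rewrite -ea -eb e.
Qed.

Lemma g2_inl b a : g2 b = inl a -> b = y /\ a = x.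
Proof. by case: (g2_cases b) => [[-> ->] [] ->|[b' [-> _]]]. Qed.

Lemma Gpp_rep W K : unif K W -> (forall c : U, c \in W) ->
  (forall a b, a != b -> altw W (inl a) (inl b) = e1 a b) ->
  (forall a b, a != b -> altw W (g2 a) (g2 b) = e2 a b) ->
  (forall a b', a != x -> altw W (inl a) (inr b') = false) ->
  symmetric e2 -> k_word_representable G K.
Proof.
move=> hu hm h1 h2 h3 se2; exists W; split; first by move=> v; apply: hu.
apply: rep_of => // u v; case: u => [a|a]; case: v => [b|b] uv.
- by apply: h1; apply: contra uv => /eqP ->.
- case: (eqVneq a x) => [->|ax]; last by rewrite h3 //= (negbTE ax).
  have := h2 y (val b); rewrite g2_y g2_val => -> /=; rewrite ?eqxx //.
  by rewrite eq_sym; apply: (valP b).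
- rewrite altw_sym.
  case: (eqVneq b x) => [->|bx]; last by rewrite h3 //= (negbTE bx).
  have := h2 y (val a); rewrite g2_y g2_val => -> /=; first by rewrite se2; case: eqP.
  by rewrite eq_sym; apply: (valP a).
- have := h2 (val a) (val b); rewrite !g2_val => -> //.
Qed.


Lemma inl_injU : injective (@inl T1 {v : T2 | v != y}).
Proof. by move=> ? ? []. Qed.

Lemma Gpp_upper K k1 k2 : 2 <= K -> k_word_representable e1 k1 ->
  k_word_representable e2 k2 -> k1 <= K -> k2 <= K -> symmetric e2 ->
  k_word_representable G K.
Proof.
move=> K2 [w1 [hu1 hr1]] [w2 [hu2 hr2]] kK1 kK2 se2.
have [W1 [u1 m1 f1 a1]] := lift inl_injU hu1 hr1 kK1.
have [W2 [u2 m2 f2 a2]] := lift g2_inj hu2 hr2 kK2.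
have z2 : inl x \in W2 by rewrite -g2_y.
have disj : forall c, c \in W1 -> c \in W2 -> c = inl x.
  move=> c /m1 [a ->] /m2 [b]; move/esym/g2_inl => [_ ->] //.
have [W [uW mW aW1 aW2 aW3]] := glue_words K2 u1 u2 (f1 x) z2 disj.
apply: (Gpp_rep uW) => //.
- by case=> [a|b']; rewrite mW ?f1 // -g2_val f2 orbT.
- by move=> a b ab; rewrite aW1 ?f1 ?a1.
- by move=> a b ab; rewrite aW2 ?f2 ?a2 // (inj_eq g2_inj).
- move=> a b' ax; rewrite aW3 ?f1 //; first by rewrite -g2_val f2.
Qed.

Lemma Gpp_single2 k1 : (forall b : T2, b = y) -> k_word_representable e1 k1 ->
  symmetric e2 -> k_word_representable G k1.
Proof.
move=> hT2 [w1 [hu1 hr1]] se2.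
have [W1 [u1 m1 f1 a1]] := lift inl_injU hu1 hr1 (leqnn k1).
have nob : forall b' : {v : T2 | v != y}, False.
  by move=> b'; have := valP b'; rewrite (hT2 (val b')) eqxx.
apply: (Gpp_rep u1) => //.
all: first [ by case=> [a|b'] //; case: (nob b') | by move=> a b; rewrite (hT2 a) (hT2 b) eqxx
  | by move=> a b'; case: (nob b') ].
Qed.

Lemma Gpp_single1 k2 : (forall a : T1, a = x) -> k_word_representable e2 k2 ->
  symmetric e2 -> k_word_representable G k2.
Proof.
move=> hT1 [w2 [hu2 hr2]] se2.
have [W2 [u2 m2 f2 a2]] := lift g2_inj hu2 hr2 (leqnn k2).
apply: (Gpp_rep u2) => //.
all: first [ by case=> [a|b']; [rewrite (hT1 a) -g2_y | rewrite -g2_val]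
  | by move=> a b; rewrite (hT1 a) (hT1 b) eqxx | by move=> a b'; rewrite (hT1 a) eqxx ].
Qed.

Definition gl1 (t : U) : option T1 := if t is inl a then Some a else None.
Definition gl2 (t : U) : option T2 :=
  match t with inl a => if a == x then Some y else None | inr b' => Some (val b') end.

Lemma Gpp_lower1 k : k_word_representable G k -> k_word_representable e1 k.
Proof.
apply: (restrict (f := inl) (g := gl1)) => //.
by move=> [a|b] a' //= [] ->.
Qed.

Lemma Gpp_lower2 k : symmetric e2 -> k_word_representable G k -> k_word_representable e2 k.
Proof.
move=> se2; apply: (restrict (f := g2) (g := gl2)).
- move=> a; case: (g2_cases a) => [[-> ->]|[b' [-> <-]]] //=.
  by rewrite eqxx.
- move=> [a|b'] a' /=.
    by case: eqP => // -> [] <-; rewrite g2_y.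
  by move=> [] <-; rewrite g2_val.
- move=> a b ab.
  case: (g2_cases a) => [[ea ->]|[a' [-> ea]]];
  case: (g2_cases b) => [[eb ->]|[b' [-> eb]]] /=.
  + by rewrite ea eb eqxx in ab.
  + by rewrite eqxx /= ea eb.
  + by rewrite eqxx /= eb ea.
  + by rewrite ea eb.
Qed.
End Gpp.

Section Edgeword.
Variable U : eqType.
Implicit Types c d : U.
Definition Ew c d n := flatten (map (cons c) (nseq n [:: d])).

Lemma Ew_path c d n : c != d -> path (@neqr U) d (Ew c d n).
Proof.
move=> cd; elim: n => [|n IH] //=.
by rewrite {1 2}/neqr eq_sym cd; exact: IH.
Qed.

Lemma Ew_sorted c d n : c != d -> sorted (@neqr U) (Ew c d n).
Proof.
move=> cd; case: n => [|n] //=; rewrite /neqr cd /=.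
exact: (Ew_path n cd).
Qed.

Lemma Ew_mem c d n u : u \in Ew c d n -> (u == c) || (u == d).
Proof.
move/mem_blocks1 => /orP [->//|/flattenP [s]].
by rewrite mem_nseq => /andP [_ /eqP ->]; rewrite inE => ->; rewrite orbT.
Qed.

Lemma Ew_unif c d n : c != d -> unif n (Ew c d n).
Proof.
move=> cd u /Ew_mem /orP [] /eqP ->.
  rewrite count_blocks ?size_nseq //; apply/allP => s.
  by rewrite mem_nseq => /andP [_ /eqP ->]; rewrite inE.
rewrite count_blocks_ne; last by rewrite eq_sym.
by rewrite map_nseq /= eqxx sumn_nseq mul1n.
Qed.

Lemma Ew_in1 c d n : 0 < n -> c \in Ew c d n.
Proof. by case: n => //= n _; rewrite inE eqxx. Qed.

Lemma Ew_in2 c d n : 0 < n -> d \in Ew c d n.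
Proof. by case: n => //= n _; rewrite inE inE eqxx orbT. Qed.

Lemma Ew_alt c d n : c != d -> altw (Ew c d n) c d.
Proof.
move=> cd; rewrite /altw; have -> : filter (pf c d) (Ew c d n) = Ew c d n.
  by apply/all_filterP/allP => u /Ew_mem.
exact: Ew_sorted.
Qed.

End Edgeword.

Section Gp.
Variables (T1 T2 : finType) (e1 : rel T1) (e2 : rel T2) (x : T1) (y : T2).
Local Notation U := (T1 + T2)%type.
Local Notation G := (join_edge e1 e2 x y).

Lemma Gp_rep W K : unif K W -> (forall c : U, c \in W) ->
  (forall a b, a != b -> altw W (inl a) (inl b) = e1 a b) ->
  (forall a b, a != b -> altw W (inr a) (inr b) = e2 a b) ->
  altw W (inl x) (inr y) ->
  (forall a b, (a != x) || (b != y) -> altw W (inl a) (inr b) = false) ->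
  k_word_representable G K.
Proof.
move=> hu hm h1 h2 h3 h4; exists W; split; first by move=> v; apply: hu.
apply: rep_of => // u v; case: u => [a|a]; case: v => [b|b] uv.
- by apply: h1; apply: contra uv => /eqP ->.
- change (altw W (inl a) (inr b) = (a == x) && (b == y)).
  case: (eqVneq a x) => [->|ax]; case: (eqVneq b y) => [->|hb] //=;
    by rewrite h4 ?ax ?hb ?orbT.
- change (altw W (inr a) (inl b) = (a == y) && (b == x)); rewrite altw_sym.
  case: (eqVneq b x) => [->|ax]; case: (eqVneq a y) => [->|hb] //=;
    by rewrite h4 ?ax ?hb ?orbT.
- by apply: h2; apply: contra uv => /eqP ->.
Qed.

Lemma inl_inj2 : injective (@inl T1 T2). Proof. by move=> ? ? []. Qed.
Lemma inr_inj2 : injective (@inr T1 T2). Proof. by move=> ? ? []. Qed.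

Lemma Gp_upper K k1 k2 : 2 <= K -> k_word_representable e1 k1 ->
  k_word_representable e2 k2 -> k1 <= K -> k2 <= K ->
  k_word_representable G K.
Proof.
move=> K2 [w1 [hu1 hr1]] [w2 [hu2 hr2]] kK1 kK2.
have [W1 [u1 m1 f1 a1]] := lift inl_inj2 hu1 hr1 kK1.
have [W2 [u2 m2 f2 a2]] := lift inr_inj2 hu2 hr2 kK2.
have xy : (inl x : U) != inr y by [].
set E := Ew (inl x : U) (inr y) K.
have uE : unif K E by apply: Ew_unif.
have K0 : 0 < K by lia.
have disj1 : forall c, c \in W1 -> c \in E -> c = inl x.
  move=> c /m1 [a ->] /Ew_mem /orP [/eqP -> //|] //.
have [W12 [u12 m12 b1 bE c1]] := glue_words K2 u1 uE (f1 x) (Ew_in1 _ _ K0) disj1.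
have y12 : (inr y : U) \in W12 by rewrite m12 Ew_in2 ?orbT.
have disj2 : forall c, c \in W12 -> c \in W2 -> c = inr y.
  move=> c; rewrite m12 => /orP [/m1 [a ->] /m2 [b] //|/Ew_mem /orP [] /eqP -> //].
  by move=> /m2 [b].
have [W [uW mW d1 d2 d3]] := glue_words K2 u12 u2 y12 (f2 y) disj2.
have in12 : forall a, (inl a : U) \in W12 by move=> a; rewrite m12 f1.
apply: (Gp_rep uW).
- by case=> [a|b]; rewrite mW ?in12 // f2 orbT.
- by move=> a b ab; rewrite d1 ?in12 // b1 ?f1 ?a1.
- by move=> a b ab; rewrite d2 ?f2 // a2.
- rewrite d1 ?in12 // bE ?Ew_in1 ?Ew_in2 //; exact: Ew_alt.
- move=> a b; case: (eqVneq b y) => [->|hb]; rewrite ?orbF ?orbT => ha.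
    by rewrite d1 ?in12 // c1 ?f1 ?Ew_in2.
  by rewrite d3 ?in12 ?f2.
Qed.

Definition gq1 (t : U) : option T1 := if t is inl a then Some a else None.
Definition gq2 (t : U) : option T2 := if t is inr a then Some a else None.

Lemma Gp_lower1 k : k_word_representable G k -> k_word_representable e1 k.
Proof.
apply: (restrict (f := inl) (g := gq1)) => //.
by move=> [a|b] a' //= [] ->.
Qed.

Lemma Gp_lower2 k : k_word_representable G k -> k_word_representable e2 k.
Proof.
apply: (restrict (f := inr) (g := gq2)) => //.
by move=> [a|b] a' //= [] ->.
Qed.

End Gp.

Lemma uniq_sorted_neq (U : eqType) (s : seq U) : uniq s -> sorted (@neqr U) s.
Proof.
elim: s => [|c s IH] //=; case: s IH => [|d t] IH //= /andP [hc hu].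
apply/andP; split; last exact: IH.
rewrite /neqr; apply: contra hc => /eqP ->; by rewrite inE eqxx.
Qed.

Lemma complete_kwr (T : finType) (e : rel T) : complete_graph e -> k_word_representable e 1.
Proof.
move=> hc; exists (enum T); split.
  by move=> v; rewrite count_uniq_mem ?enum_uniq ?mem_enum.
apply: rep_of; first by move=> v; rewrite mem_enum.
move=> a b ab; rewrite hc //; apply: uniq_sorted_neq; apply: filter_uniq; exact: enum_uniq.
Qed.

Lemma complete_rep1 (T : finType) (e : rel T) (t : T) : complete_graph e -> rep_number e 1.
Proof.
move=> hc; split; first exact: complete_kwr.
by move=> k' /(k_pos t).
Qed.

Lemma single_kwr (T : finType) (e : rel T) (x : T) : (forall a, a = x) -> k_word_representable e 1.
Proof.
move=> hx; apply: complete_kwr => u v; by rewrite (hx u) (hx v) eqxx.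
Qed.

Lemma ge2 (T : finType) (e : rel T) k (u v : T) : u != v -> ~~ e u v ->
  k_word_representable e k -> 2 <= k.
Proof.
move=> uv ne hk; have := k_pos u hk.
case: k hk => [|[|k]] // hk _.
by have := k1_complete hk uv; rewrite (negbTE ne).
Qed.

Lemma card1_all (T : finType) (x : T) : #|T| = 1 -> forall a, a = x.
Proof.
move=> h a; have : #|T| <= 1 by rewrite h.
by move/fintype_le1P => H; apply: (H x).
Qed.

Lemma card2_ex (T : finType) (x : T) : 1 < #|T| -> exists a, a != x.
Proof.
move/card_gt1P => [u [v [_ _ uv]]].
case: (eqVneq u x) => [e|ne]; last by exists u.
by exists v; rewrite -e eq_sym.
Qed.

Lemma card_pos (T : finType) (x : T) : 0 < #|T|.
Proof. by apply/card_gt0P; exists x. Qed.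

Unset Implicit Arguments.

Theorem theorem16 (T1 T2 : finType) (e1 : rel T1) (e2 : rel T2)
    (x : T1) (y : T2) (k1 k2 : nat) :
  simple_graph e1 -> simple_graph e2 ->
  word_representable e1 -> word_representable e2 ->
  rep_number e1 k1 -> rep_number e2 k2 ->
  let k := maxn k1 k2 in
  let G' := join_edge e1 e2 x y in
  let G'' := glue_vertex e1 e2 x y in
  (#|T1| = 1 -> #|T2| = 1 ->
     [/\ complete_graph G' /\ complete_graph G'', k1 = 1, k2 = 1,
         rep_number G' 1 & rep_number G'' 1]) /\
  (minn #|T1| #|T2| = 1 -> 1 < maxn #|T1| #|T2| ->
     rep_number G'' k /\ rep_number G' (maxn k 2)) /\
  (1 < minn #|T1| #|T2| ->
     rep_number G' (maxn k 2) /\ rep_number G'' (maxn k 2)).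
Proof.
move=> [se1 ie1] [se2 ie2] _ _ R1 R2; cbv zeta.
have k1p : 0 < k1 := k_pos x (proj1 R1).
have k2p : 0 < k2 := k_pos y (proj1 R2).
have min1 := proj2 R1.
have min2 := proj2 R2.
have cp1 := card_pos x; have cp2 := card_pos y.
have Gpl1 : forall k', k_word_representable (glue_vertex e1 e2 x y) k' -> k1 <= k'.
  by move=> k' /Gpp_lower1 /min1.
have Gpl2 : forall k', k_word_representable (glue_vertex e1 e2 x y) k' -> k2 <= k'.
  by move=> k' /(Gpp_lower2 se2) /min2.
have Gl1 : forall k', k_word_representable (join_edge e1 e2 x y) k' -> k1 <= k'.
  by move=> k' /Gp_lower1 /min1.
have Gl2 : forall k', k_word_representable (join_edge e1 e2 x y) k' -> k2 <= k'.
  by move=> k' /Gp_lower2 /min2.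
have Gpup : forall K, 2 <= K -> k1 <= K -> k2 <= K ->
    k_word_representable (join_edge e1 e2 x y) K.
  by move=> K K2 h1 h2; apply: (Gp_upper x y K2 (proj1 R1) (proj1 R2)).
have Gppup : forall K, 2 <= K -> k1 <= K -> k2 <= K ->
    k_word_representable (glue_vertex e1 e2 x y) K.
  by move=> K K2 h1 h2; apply: (Gpp_upper x y K2 (proj1 R1) (proj1 R2)).
have Gp2 : 1 < #|T1| \/ 1 < #|T2| -> forall k',
    k_word_representable (join_edge e1 e2 x y) k' -> 2 <= k'.
  move=> [h|h] k' hk'.
    have [a ha] := card2_ex x h.
    apply: (ge2 (u := inl a) (v := inr y)) hk' => //=.
    by rewrite (negbTE ha).
  have [b hb] := card2_ex y h.
  apply: (ge2 (u := inl x) (v := inr b)) hk' => //=.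
  by rewrite (negbTE hb) andbF.
have Gprep : 1 < #|T1| \/ 1 < #|T2| ->
    rep_number (join_edge e1 e2 x y) (maxn (maxn k1 k2) 2).
  move=> h; split; first by apply: Gpup; lia.
  move=> k' hk'; have := Gl1 _ hk'; have := Gl2 _ hk'; have := Gp2 h k' hk'; lia.
split; [|split].
- move=> h1 h2.
  have a1 := card1_all x h1; have a2 := card1_all y h2.
  have k1e : k1 = 1 by have := min1 1 (single_kwr e1 a1); lia.
  have k2e : k2 = 1 by have := min2 1 (single_kwr e2 a2); lia.
  have nob : forall b' : {v : T2 | v != y}, False.
    by move=> b'; have := valP b'; rewrite (a2 (val b')) eqxx.
  have cG' : complete_graph (join_edge e1 e2 x y).
    move=> [a|a] [b|b] uv /=.
    - by move: uv; rewrite (a1 a) (a1 b) eqxx.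
    - by rewrite (a1 a) (a2 b); apply/andP; split; apply/eqP.
    - by rewrite (a1 b) (a2 a); apply/andP; split; apply/eqP.
    - by move: uv; rewrite (a2 a) (a2 b) eqxx.
  have cG'' : complete_graph (glue_vertex e1 e2 x y).
    move=> [a|a] [b|b] uv.
    - by move: uv; rewrite (a1 a) (a1 b) eqxx.
    - by case: (nob b).
    - by case: (nob a).
    - by case: (nob a).
  split => //; [exact: (complete_rep1 (inl x) cG') | exact: (complete_rep1 (inl x) cG'')].
- move=> hmin hmax.
  have Tcase : (#|T1| = 1 /\ 1 < #|T2|) \/ (#|T2| = 1 /\ 1 < #|T1|) by lia.
  split; last by apply: Gprep; lia.
  case: Tcase => [[h1 _]|[h2 _]].
    have a1 := card1_all x h1.
    have k1e : k1 = 1 by have := min1 1 (single_kwr e1 a1); lia.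
    have -> : maxn k1 k2 = k2 by lia.
    split; first exact: (Gpp_single1 e1 y a1 (proj1 R2) se2).
    by move=> k' /Gpl2.
  have a2 := card1_all y h2.
  have k2e : k2 = 1 by have := min2 1 (single_kwr e2 a2); lia.
  have -> : maxn k1 k2 = k1 by lia.
  split; first exact: (Gpp_single2 x a2 (proj1 R1) se2).
  by move=> k' /Gpl1.
- move=> hmin; split; first by apply: Gprep; lia.
  split; first by apply: Gppup; lia.
  move=> k' hk'; have := Gpl1 _ hk'; have := Gpl2 _ hk'.
  have [a ha] := card2_ex x (ltac:(lia) : 1 < #|T1|).
  have [b hb] := card2_ex y (ltac:(lia) : 1 < #|T2|).
  have nG : ~~ glue_vertex e1 e2 x y (inl a) (inr (exist _ b hb)) by rewrite /= (negbTE ha).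
  have := @ge2 _ _ k' (inl a) (inr (exist _ b hb)) isT nG hk'.
  lia.
Qed.
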